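(* Let $X$ be a spectrally negative Lévy process with scale function $W$ (as in the context). Let $\omega$ be a nonnegative locally bounded measurable function on $\mathbb{R}$, fix $u\in\mathbb{R}$ and put $\omega_u(z):=\omega(u-z)$. Let $W^{(\omega)}$ and $W^{(\omega_u)}$ be the $\omega$-scale function and the $\omega_u$-scale function respectively, i.e. the unique locally bounded solutions of \[ W^{(\omega)}(x,y)=W(x-y)+\int_y^xW(x-z)\omega(z)W^{(\omega)}(z,y)dz,\qquad W^{(\omega_u)}(x,y)=W(x-y)+\int_y^xW(x-z)\omega(u-z)W^{(\omega_u)}(z,y)dz \] for $x,y\in\mathbb{R}$. Then $W^{(\omega_u)}(u-y,u-x)=W^{(\omega)}(x,y)$ for all $x,y\in\mathbb{R}$.
   Context: $X$ is a spectrally negative Lévy process with Laplace exponent $\psi(\lambda)=\log\mathbb{E}e^{\lambda X_1}$; its scale function $W:\mathbb{R}\to[0,\infty)$ satisfies $W(x)=0$ for $x<0$, is increasing on $[0,\infty)$, and $\int_0^\infty e^{-\lambda x}W(x)dx=1/\psi(\lambda)$ for $\lambda$ large enough. It is known that, for nonnegative locally bounded measurable $\varpi$, the unique locally bounded solution $W^{(\varpi)}$ of $W^{(\varpi)}(x,y)=W(x-y)+\int_y^xW(x-z)\varpi(z)W^{(\varpi)}(z,y)dz$ is also the unique locally bounded solution of $W^{(\varpi)}(x,y)=W(x-y)+\int_y^xW^{(\varpi)}(x,z)\varpi(z)W(z-y)dz$. *)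

(* Defs.v *)
From HB Require Import structures.
From mathcomp Require Import all_boot all_order all_algebra.
From mathcomp Require Import all_classical all_reals all_analysis.
Set Implicit Arguments. Unset Strict Implicit. Unset Printing Implicit Defensive.
Import Order.TTheory GRing.Theory Num.Theory.
Import numFieldNormedType.Exports.
Local Open Scope classical_set_scope.
Local Open Scope ring_scope.

Definition oint (R : realType) (a b : R) (f : R -> R) : R :=
  if a <= b then Rintegral lebesgue_measure `[a, b]%classic f
  else - Rintegral lebesgue_measure `[b, a]%classic f.

(* Laplace exponent of a spectrally negative Levy process, given through its
   Levy-Khintchine triplet (gamma, sigma, Pi):
     psi(l) = gamma l + sigma^2 l^2 / 2
              + \int_(-oo,0) (e^{l x} - 1 - l x 1_{x > -1}) Pi(dx),  l >= 0,
   where Pi is a Levy measure carried by (-oo,0), and the process is not the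
   negative of a subordinator (i.e. does not have monotone decreasing paths). *)
Definition is_SNLP_laplace_exponent (R : realType) (psi : R -> R) : Prop :=
  exists (gamma sigma : R) (Pi : {measure set R -> \bar R}),
    [/\ Pi `[0, +oo[%classic = 0%E,
        (\int[Pi]_(x in setT) (Num.min 1 (x ^+ 2))%:E < +oo)%E,
        ~ [/\ sigma = 0,
              (\int[Pi]_(x in `](-1)%R, 0%R[%classic) (`|x|)%:E < +oo)%E &
              gamma + Rintegral Pi `]-1, 0[%classic (fun x => `|x|) <= 0] &
        forall l, 0 <= l ->
          psi l = gamma * l + sigma ^+ 2 / 2 * l ^+ 2
                  + Rintegral Pi `]-oo, 0[%classic
                      (fun x => expR (l * x) - 1
                                - (if - 1 < x then l * x else 0))].

Definition is_scale_function (R : realType) (psi : R -> R) (W : R -> R) : Prop :=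
  [/\ forall x, x < 0 -> W x = 0,
      forall x, 0 <= W x,
      {in `[0, +oo[ &, {homo W : x y / x <= y}} &
      exists l0 : R, forall l, l0 < l ->
        0 < psi l /\
        (\int[@lebesgue_measure R]_(x in `[0%R, +oo[%classic) (expR (- (l * x)) * W x)%:E
          = ((psi l)^-1)%:E)%E].

Definition locally_bounded1 (R : realType) (f : R -> R) : Prop :=
  forall M : R, exists C : R, forall x, `|x| <= M -> `|f x| <= C.

Definition locally_bounded2 (R : realType) (F : R -> R -> R) : Prop :=
  forall M : R, exists C : R, forall x y, `|x| <= M -> `|y| <= M -> `|F x y| <= C.

Definition is_omega_scale_function (R : realType) (W w : R -> R)
    (F : R -> R -> R) : Prop :=
  [/\ locally_bounded2 F,
      forall y, measurable_fun setT (fun z => F z y) &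
      forall x y, F x y = W (x - y) + oint y x (fun z => W (x - z) * w z * F z y)].

(* Main.v *)
Require Import Defs.
From HB Require Import structures.
From mathcomp Require Import all_boot all_order all_algebra.
From mathcomp Require Import all_classical all_reals all_analysis.
From mathcomp Require Import measurable_realfun.
From mathcomp Require Import lra ring.
Import Order.TTheory GRing.Theory Num.Theory.
Import numFieldNormedType.Exports.
Local Open Scope classical_set_scope.
Local Open Scope ring_scope.

Section S.
Context {R : realType}.
Notation mu := (@lebesgue_measure R).

Lemma bnd_of (A : set R) (f : R -> R) C : (forall x, A x -> `|f x| <= C) -> [bounded f x | x in A].
Proof.
move=> hC; rewrite /bounded_near; near=> M => x Ax /=.
apply: le_trans (hC x Ax) _; near: M; exact: nbhs_pinfty_ge (num_real C).
Unshelve. all: end_near. Qed.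

Lemma int_cc (a b C : R) (f : R -> R) : measurable_fun setT f ->
  (forall x, a <= x <= b -> `|f x| <= C) -> mu.-integrable `[a, b] (EFin \o f).
Proof.
move=> mf hC; apply: measurable_bounded_integrable => //.
- have := lebesgue_measure_itv `[a, b]; rewrite /= => ->; case: ifP => //= _; rewrite -EFinD ltry.
- by [].
- exact: (measurable_funS measurableT (@subsetT _ _) mf).
- by apply: (@bnd_of _ _ C) => x /=; rewrite in_itv /= => /hC.
Qed.

Lemma mrefl (u : R) : measurable_fun setT (fun z : R => u - z).
Proof. by apply: measurable_funB => //; exact: measurable_id. Qed.

Lemma lebesgue_measureR (u : R) (A : set R) : measurable A ->
  pushforward mu ((fun z => u - z) : _ -> measurableTypeR R) A = mu A.
Proof.
move=> mA; apply/esym/lebesgue_measure_unique => //=; first exact: mrefl.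
move=> _ _ [[a b]] _ <-.
rewrite /pushforward (_ : _ @^-1` _ = `[u - b, u - a[%classic); last first.
  apply/seteqP; split => z /=; rewrite !in_itv /= => /andP[h1 h2];
    apply/andP; split; lra.
rewrite !lebesgue_measure_itv /= !lte_fin.
have -> : (u - b < u - a) = (a < b) by apply/idP/idP => ?; lra.
case: ifP => // _; rewrite -!EFinD; congr EFin; lra.
Qed.

Lemma pre_refl (u a b : R) : (fun z : R => u - z) @^-1` `[a, b] = `[u - b, u - a]%classic.
Proof.
apply/seteqP; split => z /=; rewrite !in_itv /= => /andP[h1 h2]; apply/andP; split; lra.
Qed.

Lemma Rint_refl (u a b : R) (f : R -> R) : measurable_fun setT f ->
  mu.-integrable `[u - b, u - a] (EFin \o (fun z => f (u - z))) ->
  \int[mu]_(x in `[a, b]) f x = \int[mu]_(z in `[u - b, u - a]) f (u - z).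
Proof.
move=> mf hi; rewrite /Rintegral; congr fine.
pose r := ((fun z : R => (u - z)%R) : measurableTypeR R -> measurableTypeR R).
have mr : measurable_fun setT r by exact: mrefl.
transitivity (\int[pushforward mu r]_(x in `[a,b]) (f x)%:E)%E.
  apply: eq_measure_integral => A mA _ /=.
  exact (esym (lebesgue_measureR u A mA)).
have E : r @^-1` `[a, b] = `[u - b, u - a]%classic by exact: pre_refl.
rewrite (@integral_pushforward _ _ _ _ R r mr mu `[a,b] (EFin \o f)) // ?E //.
- exact/measurable_EFinP.
Qed.

Lemma int_patchZl (E : set R) (g : R -> R) (c : R) : measurable E ->
  mu.-integrable E (EFin \o g) ->
  (\int[mu]_s (c * (g \_ E) s)%:E = (c * \int[mu]_(s in E) g s)%:E)%E.
Proof.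
move=> mE ig.
have ig' : mu.-integrable setT (EFin \o (g \_ E)).
  rewrite -restrict_EFin; exact: ((@integrable_mkcond _ _ R mu E (EFin \o g) mE).1 ig).
rewrite (eq_integral (fun s : measurableTypeR R => c%:E * ((g \_ E) s)%:E)%E); last by move=> s _; rewrite EFinM.
rewrite integralZl // EFinM; congr (_ * _)%E.
rewrite Rintegral_mkcond /Rintegral fineK //; exact: integrable_fin_num.
Qed.

Lemma int_patchZr (E : set R) (g : R -> R) (c : R) : measurable E ->
  mu.-integrable E (EFin \o g) ->
  (\int[mu]_s ((g \_ E) s * c)%:E = ((\int[mu]_(s in E) g s) * c)%:E)%E.
Proof.
move=> mE ig; rewrite mulrC -int_patchZl //.
by apply: eq_integral => s _; rewrite mulrC.
Qed.

Lemma muIfin (a b : R) : (mu (`[a, b]%classic : set (measurableTypeR R)) < +oo)%E.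
Proof.
have := lebesgue_measure_itv `[a, b]; rewrite /= => ->.
by case: ifP => //= _; rewrite -EFinD ltry.
Qed.

Lemma mshift (s : R) : measurable_fun setT (fun t : R => t - s).
Proof. by apply: measurable_funB => //; exact: measurable_id. Qed.

Lemma memI (x a b : R) : (x \in (`[a, b]%classic : set R)) = (a <= x <= b).
Proof. by rewrite mem_setE /= in_itv. Qed.

Lemma fub (y x K A B : R) (W a b : R -> R) :
  y <= x ->
  measurable_fun setT W -> measurable_fun setT a -> measurable_fun setT b ->
  (forall r, r < 0 -> W r = 0) ->
  (forall r, r <= x - y -> `|W r| <= K) ->
  (forall t, y <= t <= x -> `|a t| <= A) ->
  (forall t, y <= t <= x -> `|b t| <= B) ->
  \int[mu]_(t in `[y, x]) (a t * \int[mu]_(s in `[y, t]) (W (t - s) * b s)) =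
  \int[mu]_(s in `[y, x]) ((\int[mu]_(t in `[s, x]) (a t * W (t - s))) * b s).
Proof.
move=> yx mW ma mb W0 WK aA bB.
have K0 : 0 <= K by apply: le_trans (WK 0 _); rewrite ?normr_ge0 ?subr_ge0.
have A0 : 0 <= A by apply: le_trans (aA y _); rewrite ?normr_ge0 ?lexx.
have B0 : 0 <= B by apply: le_trans (bB y _); rewrite ?normr_ge0 ?lexx.
pose D := (`[y, x]%classic : set (measurableTypeR R)).
have mD : measurable D by exact: measurable_itv.
pose a' := a \_ D. pose b' := b \_ D.
have ma' : measurable_fun setT a'.
  exact: ((@measurable_restrictT _ _ _ _ D a mD).1 (measurable_funTS ma)).
have mb' : measurable_fun setT b'.
  exact: ((@measurable_restrictT _ _ _ _ D b mD).1 (measurable_funTS mb)).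
pose f := (fun p : (measurableTypeR R * measurableTypeR R)%type =>
   (a' p.1 * W (p.1 - p.2) * b' p.2)%:E).
have mf : measurable_fun setT f.
  apply/measurable_EFinP; apply: measurable_funM; first apply: measurable_funM.
  - exact: measurableT_comp ma' measurable_fst.
  - apply: measurableT_comp mW _; exact: measurable_funB measurable_fst measurable_snd.
  - exact: measurableT_comp mb' measurable_snd.
have imf : (mu \x mu)%E.-integrable setT f.
  apply/integrableP; split => //.
  apply: (@le_lt_trans _ _ (\int[(mu \x mu)%E]_p ((A * K * B)%:E * (\1_(D `*` D) p)%:E))%E).
    apply: ge0_le_integral => //.
    - by apply: measurableT_comp => //.
    - apply/measurable_EFinP; apply: measurable_funM => //.
      by apply: measurable_indic; apply: measurableX.
    - move=> [t s] _; rewrite -EFinM lee_fin /f /a' /b' /= !patchE indicE.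
      rewrite /point /=.
      case: (boolP (t \in D)) => tD; case: (boolP (s \in D)) => sD;
        rewrite ?mul0r ?mulr0 ?normr0 ?mulr_ge0 //.
      have -> : (t, s) \in D `*` D by apply/mem_set; split; exact/set_mem.
      move: tD sD; rewrite !memI => /andP[t1 t2] /andP[s1 s2].
      rewrite mulr1 !normrM; apply: ler_pM; rewrite ?mulr_ge0 ?normr_ge0 //; last first.
        by apply: bB; rewrite s1 s2.
      apply: ler_pM; rewrite ?normr_ge0 //; first by apply: aA; rewrite t1 t2.
      apply: WK; lra.
  rewrite ge0_integralZl_EFin //; try (by rewrite !mulr_ge0);
    try (by apply/measurable_EFinP; apply: measurable_indic; apply: measurableX).
  have mDD : measurable (D `*` D) by apply: measurableX.
  rewrite (@integral_indic _ _ R (mu \x mu)%E setT measurableT (D `*` D) mDD) setIT.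
  have H : ((mu \x mu)%E (D `*` D) < +oo)%E.
    rewrite (product_measure1E mu mu mD mD).
    apply: lte_mul_pinfty; [exact: measure_ge0 | | exact: muIfin].
    by rewrite ge0_fin_numE ?muIfin //; exact: measure_ge0.
  apply: lte_mul_pinfty => //; by rewrite lee_fin !mulr_ge0.
have E1 : forall t, (\int[mu]_s f (t, s) =
    ((fun t => a t * \int[mu]_(s in `[y, t]) (W (t - s) * b s)) \_ D t)%:E)%E.
  move=> t; rewrite patchE; case: ifPn => tD.
  - have := tD; rewrite memI => /andP[t1 t2].
    rewrite -int_patchZl //; last first.
      apply: (@int_cc _ _ (K * B)).
        apply: measurable_funM => //; exact: measurableT_comp mW (mrefl t).
      move=> s /andP[s1 s2]; rewrite normrM; apply: ler_pM => //.
        by apply: WK; lra.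
      by apply: bB; rewrite s1 (le_trans s2 t2).
    apply: eq_integral => s _; rewrite /f /a' /b' /= !patchE tD memI; congr EFin.
    rewrite /D memI /point /=.
    case: (boolP (y <= s <= t)) => h.
      by rewrite ifT ?mulrA //; move: h => /andP[? ?]; apply/andP; split => //; lra.
    case: ifP => h2; last by rewrite !mulr0.
    rewrite W0 ?mulr0 ?mul0r //.
    move: h h2; rewrite negb_and -!ltNge => /orP[]; lra.
  - rewrite /f /a' /= patchE (negbTE tD) /point /=.
    under eq_integral do rewrite !mul0r.
    exact: integral0.
have E2 : forall s, (\int[mu]_t f (t, s) =
    ((fun s => (\int[mu]_(t in `[s, x]) (a t * W (t - s))) * b s) \_ D s)%:E)%E.
  move=> s; rewrite patchE; case: ifPn => sD.
  - have := sD; rewrite memI => /andP[s1 s2].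
    rewrite -int_patchZr //; last first.
      apply: (@int_cc _ _ (A * K)).
        apply: measurable_funM => //; exact: measurableT_comp mW (mshift s).
      move=> t /andP[t1 t2]; rewrite normrM; apply: ler_pM => //.
        by apply: aA; rewrite t2 (le_trans s1 t1).
      by apply: WK; lra.
    apply: eq_integral => t _; rewrite /f /a' /b' /= !patchE sD memI; congr EFin.
    rewrite /D memI /point /=.
    case: (boolP (s <= t <= x)) => h.
      by rewrite ifT //; move: h => /andP[? ?]; apply/andP; split => //; lra.
    case: ifP => h2; last by rewrite !mul0r.
    rewrite W0 ?mulr0 ?mul0r //.
    move: h h2; rewrite negb_and -!ltNge => /orP[]; lra.
  - rewrite /f /b' /= patchE (negbTE sD) /point /=.
    under eq_integral do rewrite !mulr0.
    exact: integral0.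
rewrite [LHS]Rintegral_mkcond [RHS]Rintegral_mkcond.
transitivity (fine (\int[mu]_t \int[mu]_s f (t, s)))%E.
  rewrite /Rintegral; congr fine; apply: eq_integral => t _; rewrite E1 //.
rewrite (Fubini imf) /Rintegral; congr fine.
by apply: eq_integral => s _; rewrite E2.
Qed.

Lemma oint_self (c : R) (g : R -> R) : oint c c g = 0.
Proof. by rewrite /oint lexx set_itv1 Rintegral_set1. Qed.

Lemma absb (y x t : R) : y <= t <= x -> `|t| <= `|x| + `|y|.
Proof.
move=> /andP[h1 h2]; have hx := ler_norm x; have hy := ler_norm (- y).
rewrite normrN in hy; have ny := normr_ge0 y; have nx := normr_ge0 x.
by case: (lerP 0 t) => ht; [rewrite ger0_norm // | rewrite ltr0_norm //]; lra.
Qed.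

Lemma zero_case (W w : R -> R) (F : R -> R -> R) :
  (forall r, r < 0 -> W r = 0) -> measurable_fun setT W -> measurable_fun setT w ->
  is_omega_scale_function W w F -> forall x y, x < y -> F x y = 0.
Proof.
move=> W0 mW mw [_ mF eqF] x y xy.
rewrite eqF W0 ?subr_lt0 // add0r /oint.
have -> : (y <= x) = false by apply/negbTE; rewrite -ltNge.
rewrite /Rintegral -integral_itv_obnd_cbnd.
  rewrite integral0_eq ?oppr0 // => z /=; rewrite in_itv /= => /andP[h1 h2].
  by rewrite W0 ?mul0r // subr_lt0.
apply/measurable_EFinP; apply: measurable_funTS.
apply: measurable_funM => //; apply: measurable_funM => //.
exact: measurableT_comp mW (mrefl x).
Qed.
End S.

Local Notation mu := lebesgue_measure.

Theorem lemma2 (R : realType) (psi W : R -> R)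
  (hpsi : is_SNLP_laplace_exponent psi) (hW : is_scale_function psi W)
  (omega : R -> R)
  (homega_ge0 : forall x, 0 <= omega x)
  (homega_lb : locally_bounded1 omega)
  (homega_meas : measurable_fun setT omega)
  (u : R) (Womega Womegau : R -> R -> R)
  (hWomega : is_omega_scale_function W omega Womega)
  (hWomegau : is_omega_scale_function W (fun z => omega (u - z)) Womegau) :
  forall x y : R, Womegau (u - y) (u - x) = Womega x y.
Proof.
case: hW => W0 Wge0 Wmono _.
have Wnd : forall s t, s <= t -> W s <= W t.
  move=> s t st; case: (ltrP s 0) => s0.
    by rewrite W0.
  by apply: Wmono => //; rewrite in_itv /= andbT //; apply: le_trans st.
have mW : measurable_fun setT W by apply: nondecreasing_measurable.
have mwu : measurable_fun setT (fun z : R => omega (u - z)).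
  exact: measurableT_comp homega_meas (mrefl u).
move=> x y.
have [xy|yx|<-] := ltgtP x y.
- rewrite (@zero_case R W omega Womega W0 mW homega_meas hWomega x y xy).
  apply: (@zero_case R W _ Womegau W0 mW mwu hWomegau); lra.
- case: hWomega => Fb Fm Feq; case: hWomegau => Gb Gm Geq.
  pose M := `|u| + `|x| + `|y|.
  have [CF hCF] := Fb M; have [CG hCG] := Gb M; have [Cw hCw] := homega_lb M.
  have nu := normr_ge0 u; have nx := normr_ge0 x; have ny := normr_ge0 y.
  pose V := fun t => Womegau (u - t) (u - x).
  have bF : forall t, y <= t <= x -> `|Womega t y| <= CF.
    move=> t /absb ht; apply: hCF; rewrite /M; lra.
  have bV : forall t, y <= t <= x -> `|V t| <= CG.
    move=> t /absb ht; apply: hCG.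
      by apply: le_trans (ler_normB _ _) _; rewrite /M; lra.
    by apply: le_trans (ler_normB _ _) _; rewrite /M; lra.
  have bw : forall t, y <= t <= x -> `|omega t| <= Cw.
    move=> t /absb ht; apply: hCw; rewrite /M; lra.
  have bW : forall r, r <= x - y -> `|W r| <= W (x - y).
    by move=> r hr; rewrite ger0_norm //; apply: Wnd.
  have mV : measurable_fun setT V by exact: measurableT_comp (Gm (u - x)) (mrefl u).
  have mF : measurable_fun setT (fun t => Womega t y) by exact: Fm.
  pose a := fun t => V t * omega t.
  pose b := fun s => omega s * Womega s y.
  have ma : measurable_fun setT a by exact: measurable_funM.
  have mb : measurable_fun setT b by exact: measurable_funM.
  have ba : forall t, y <= t <= x -> `|a t| <= CG * Cw.
    move=> t ht; rewrite normrM; apply: ler_pM => //; [exact: bV | exact: bw].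
  have bb : forall t, y <= t <= x -> `|b t| <= Cw * CF.
    move=> t ht; rewrite normrM; apply: ler_pM => //; [exact: bw | exact: bF].
  have EA : forall t, y <= t ->
      Womega t y = W (t - y) + \int[mu]_(s in `[y, t]) (W (t - s) * b s).
    move=> t yt; rewrite {1}Feq /oint yt; congr (_ + _).
    by apply: eq_Rintegral => s _; rewrite /b mulrA.
  have EB : forall s, y <= s <= x ->
      V s = W (x - s) + \int[mu]_(t in `[s, x]) (a t * W (t - s)).
    move=> s /andP[ys sx]; rewrite /V Geq /oint.
    have h : u - x <= u - s by lra.
    rewrite h; congr (_ + _); first by congr W; ring.
    rewrite (@Rint_refl R u s x (fun t => a t * W (t - s))); last first.
      apply: (@int_cc R _ _ (CG * Cw * W (x - y))).
        apply: measurable_funM.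
          exact: measurableT_comp ma (mrefl u).
        exact: measurableT_comp mW (measurableT_comp (mshift s) (mrefl u)).
      move=> z hz; rewrite normrM; apply: ler_pM => //.
        by apply: ba; lra.
      by apply: bW; lra.
    - apply: measurable_funM => //; exact: measurableT_comp mW (mshift s).
    apply: eq_Rintegral => z _ /=; rewrite /a /V.
    have -> : u - (u - z) = z by ring.
    have -> : u - z - s = u - s - z by ring.
    ring.
  have yx' : y <= x by exact: ltW.
  have mD : measurable (`[y, x]%classic : set R) by exact: measurable_itv.
  have iaF : mu.-integrable `[y, x] (EFin \o (fun t => a t * W (t - y))).
    apply: (@int_cc R _ _ (CG * Cw * W (x - y))).
      apply: measurable_funM => //; exact: measurableT_comp mW (mshift y).
    move=> t ht; rewrite normrM; apply: ler_pM => //; first exact: ba.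
    by apply: bW; lra.
  have iaR : mu.-integrable `[y, x]
      (EFin \o (fun t => a t * (Womega t y - W (t - y)))).
    apply: (@int_cc R _ _ (CG * Cw * (CF + W (x - y)))).
      apply: measurable_funM => //; apply: measurable_funB => //.
      exact: measurableT_comp mW (mshift y).
    move=> t ht; rewrite normrM; apply: ler_pM => //; first exact: ba.
    apply: le_trans (ler_normB _ _) _; apply: lerD; first exact: bF.
    by apply: bW; lra.
  have ibW : mu.-integrable `[y, x] (EFin \o (fun s => W (x - s) * b s)).
    apply: (@int_cc R _ _ (W (x - y) * (Cw * CF))).
      apply: measurable_funM => //; exact: measurableT_comp mW (mrefl x).
    move=> t ht; rewrite normrM; apply: ler_pM => //; last exact: bb.
    by apply: bW; lra.
  have ibR : mu.-integrable `[y, x] (EFin \o (fun s => (V s - W (x - s)) * b s)).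
    apply: (@int_cc R _ _ ((CG + W (x - y)) * (Cw * CF))).
      apply: measurable_funM => //; apply: measurable_funB => //.
      exact: measurableT_comp mW (mrefl x).
    move=> t ht; rewrite normrM; apply: ler_pM => //; last exact: bb.
    apply: le_trans (ler_normB _ _) _; apply: lerD; first exact: bV.
    by apply: bW; lra.
  have I1 : \int[mu]_(t in `[y, x]) (a t * Womega t y) =
      \int[mu]_(t in `[y, x]) (a t * W (t - y)) +
      \int[mu]_(t in `[y, x]) (a t * (Womega t y - W (t - y))).
    rewrite -RintegralD //; apply: eq_Rintegral => t _; ring.
  have I2 : \int[mu]_(t in `[y, x]) (a t * Womega t y) =
      \int[mu]_(s in `[y, x]) (W (x - s) * b s) +
      \int[mu]_(s in `[y, x]) ((V s - W (x - s)) * b s).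
    rewrite -RintegralD //; apply: eq_Rintegral => t _; rewrite /a /b; ring.
  have J1 : \int[mu]_(t in `[y, x]) (a t * (Womega t y - W (t - y))) =
      \int[mu]_(t in `[y, x]) (a t * \int[mu]_(s in `[y, t]) (W (t - s) * b s)).
    apply: eq_Rintegral => t; rewrite memI => /andP[t1 t2].
    by rewrite (EA t t1) addrC addKr.
  have J2 : \int[mu]_(s in `[y, x]) ((V s - W (x - s)) * b s) =
      \int[mu]_(s in `[y, x]) ((\int[mu]_(t in `[s, x]) (a t * W (t - s))) * b s).
    apply: eq_Rintegral => s; rewrite memI => hs.
    by rewrite {1}(EB s hs) addrC addKr.
  have FU := @fub R y x (W (x - y)) (CG * Cw) (Cw * CF) W a b yx' mW ma mb W0 bW ba bb.
  have HV := EB y; rewrite lexx yx' /= in HV; have {}HV := HV erefl.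
  have HF := EA x yx'.
  rewrite -/(V y).
  have K1 : \int[mu]_(t in `[y, x]) (a t * W (t - y)) = V y - W (x - y) by rewrite HV; ring.
  have K2 : \int[mu]_(s in `[y, x]) (W (x - s) * b s) = Womega x y - W (x - y).
    by rewrite HF; ring.
  rewrite K1 J1 in I1; rewrite K2 J2 -FU I1 in I2.
  by move/addIr/addIr: I2.
- case: hWomegau => _ _ ->; case: hWomega => _ _ ->.
  by rewrite !subrr !oint_self.
Qed.
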